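(* Let $\mathcal H$ be a separable complex Hilbert space, $A\in L(\mathcal H)^+$, and $B\in L(\mathcal H)$ with closed range such that $(A,R(B))$ is compatible. Let $y\in\mathcal H$, $y\ne0$. Then $u\in\mathcal H$ is an $A$-least squares solution of $Bx=y$ if and only if there exists $T\in\Pi(A,R(B))$ with $Bu=Ty$.
   Context: $\|z\|_A=\langle Az,z\rangle^{1/2}$. $u$ is an $A$-least squares solution of $Bx=y$ if $\|y-Bu\|_A\le\|y-Bx\|_A$ for all $x\in\mathcal H$. $(A,\mathcal S)$ is compatible if there exists $Q\in L(\mathcal H)$ with $Q^2=Q$, $R(Q)=\mathcal S$, $AQ=Q^*A$. $\Pi(A,\mathcal S)$ is the set of $T\in L(\mathcal H)$ with $R(T)\subseteq\mathcal S$ and $\|w-Tw\|_A\le\|w-s\|_A$ for all $w\in\mathcal H$, $s\in\mathcal S$. *)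

(* Defs.v *)
From HB Require Import structures.
From mathcomp Require Import all_boot all_order all_algebra.
From mathcomp Require Import complex.
From mathcomp Require Import reals.
Set Implicit Arguments. Unset Strict Implicit. Unset Printing Implicit Defensive.
Import Order.TTheory GRing.Theory Num.Theory.
Local Open Scope ring_scope.

(* A complex Hilbert space is modelled as a left module H over the complex
   numbers C = R[i] (R : realType), equipped with an inner product
   ip : H -> H -> C (linear in the first argument, conjugate-symmetric,
   positive definite) for which H is complete w.r.t. the induced norm. *)

Section Hilbert.
Variables (R : realType) (H : lmodType R[i]) (ip : H -> H -> R[i]).

Definition inner_product : Prop :=
  [/\ (forall x y : H, ip x y = Num.conj (ip y x)),
      (forall (a : R[i]) (x y z : H), ip (a *: x + y) z = a * ip x z + ip y z),
      (forall x : H, 0 <= ip x x)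
    & (forall x : H, ip x x = 0 -> x = 0)].

Definition normH (x : H) : R := Num.sqrt (complex.Re (ip x x)).

Definition cvg_to (u : nat -> H) (x : H) : Prop :=
  forall eps : R, 0 < eps -> exists N : nat, forall n, (N <= n)%N -> normH (u n - x) < eps.

Definition cauchy_seq (u : nat -> H) : Prop :=
  forall eps : R, 0 < eps -> exists N : nat,
    forall n m, (N <= n)%N -> (N <= m)%N -> normH (u n - u m) < eps.

Definition complete_space : Prop :=
  forall u : nat -> H, cauchy_seq u -> exists x, cvg_to u x.

Definition separable_space : Prop :=
  exists d : nat -> H, forall (x : H) (eps : R), 0 < eps -> exists n, normH (x - d n) < eps.

Definition bounded_op (T : H -> H) : Prop :=
  [/\ (forall x y, T (x + y) = T x + T y),
      (forall (a : R[i]) x, T (a *: x) = a *: T x)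
    & exists M : R, forall x, normH (T x) <= M * normH x].

Definition positive_op (A : H -> H) : Prop :=
  bounded_op A /\ forall x, 0 <= ip (A x) x.

Definition range (T : H -> H) (z : H) : Prop := exists x, T x = z.

Definition closed_set (S : H -> Prop) : Prop :=
  forall (u : nat -> H) (x : H), (forall n, S (u n)) -> cvg_to u x -> S x.

Definition is_adjoint (T Ts : H -> H) : Prop :=
  forall x y, ip (T x) y = ip x (Ts y).

Definition compatible (A : H -> H) (S : H -> Prop) : Prop :=
  exists Q : H -> H,
    [/\ bounded_op Q,
        (forall x, Q (Q x) = Q x),
        (forall z, range Q z <-> S z)
      & exists Qs : H -> H,
          [/\ bounded_op Qs, is_adjoint Q Qs & forall x, A (Q x) = Qs (A x)]].

Definition Anorm (A : H -> H) (z : H) : R := Num.sqrt (complex.Re (ip (A z) z)).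

Definition A_LSS (A B : H -> H) (y u : H) : Prop :=
  forall x, Anorm A (y - B u) <= Anorm A (y - B x).

Definition PiAS (A : H -> H) (S : H -> Prop) (T : H -> H) : Prop :=
  [/\ bounded_op T,
      (forall w, S (T w))
    & forall w s, S s -> Anorm A (w - T w) <= Anorm A (w - s)].

End Hilbert.

(* Main.v *)
Require Import Defs.
From HB Require Import structures.
From mathcomp Require Import all_boot all_order all_algebra.
From mathcomp Require Import complex.
From mathcomp Require Import reals.
From mathcomp Require Import ring lra.
Import Order.TTheory GRing.Theory Num.Theory.
Local Open Scope ring_scope.
Local Open Scope complex_scope.

Section Aux.
Variables (R : realType) (H : lmodType R[i]) (ip : H -> H -> R[i]).
Hypothesis hip : inner_product ip.

Lemma ipJ x y : ip x y = Num.conj (ip y x).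
Proof. by case: hip => h _ _ _; apply: h. Qed.
Lemma ipL a x y z : ip (a *: x + y) z = a * ip x z + ip y z.
Proof. by case: hip => _ h _ _; apply: h. Qed.
Lemma ip_ge0 x : 0 <= ip x x.
Proof. by case: hip => _ _ h _; apply: h. Qed.
Lemma ip_eq0 x : ip x x = 0 -> x = 0.
Proof. by case: hip => _ _ _ h; apply: h. Qed.

Lemma ip0l z : ip 0 z = 0.
Proof.
have := ipL 1 0 0 z; rewrite scale1r addr0 mul1r => h.
by apply: (@addrI _ (ip 0 z)); rewrite -h addr0.
Qed.
Lemma ipDl x y z : ip (x + y) z = ip x z + ip y z.
Proof. by have := ipL 1 x y z; rewrite scale1r mul1r. Qed.
Lemma ipZl a x z : ip (a *: x) z = a * ip x z.
Proof. by have := ipL a x 0 z; rewrite addr0 ip0l addr0. Qed.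
Lemma ipNl x z : ip (- x) z = - ip x z.
Proof. by rewrite -scaleN1r ipZl mulN1r. Qed.
Lemma ipBl x y z : ip (x - y) z = ip x z - ip y z.
Proof. by rewrite ipDl ipNl. Qed.
Lemma ip0r z : ip z 0 = 0.
Proof. by rewrite ipJ ip0l conjC0. Qed.
Lemma ipDr x y z : ip z (x + y) = ip z x + ip z y.
Proof. by rewrite (ipJ z (x+y)) (ipJ z x) (ipJ z y) ipDl rmorphD. Qed.
Lemma ipZr a x z : ip z (a *: x) = Num.conj a * ip z x.
Proof. by rewrite (ipJ z (a*:x)) (ipJ z x) ipZl rmorphM. Qed.
Lemma ipNr x z : ip z (- x) = - ip z x.
Proof. by rewrite (ipJ z (-x)) (ipJ z x) ipNl rmorphN. Qed.
Lemma ipBr x y z : ip z (x - y) = ip z x - ip z y.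
Proof. by rewrite ipDr ipNr. Qed.

Lemma ip_real x : ip x x = (complex.Re (ip x x))%:C.
Proof. by rewrite RRe_real // ger0_real // ip_ge0. Qed.
Lemma Re_ip_ge0 x : 0 <= complex.Re (ip x x).
Proof. by rewrite -ler0c -ip_real ip_ge0. Qed.

Lemma Re_le (a b : R[i]) : a <= b -> complex.Re a <= complex.Re b.
Proof. by rewrite lecE => /andP[]. Qed.

Lemma op0 (T : H -> H) : bounded_op ip T -> T 0 = 0.
Proof.
case=> hD _ _; have := hD 0 0; rewrite addr0 => h.
by apply: (@addrI _ (T 0)); rewrite -h addr0.
Qed.
Lemma opN (T : H -> H) x : bounded_op ip T -> T (- x) = - T x.
Proof. move=> hT; case: (hT) => _ hZ _; by rewrite -scaleN1r hZ scaleN1r. Qed.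
Lemma opB (T : H -> H) x y : bounded_op ip T -> T (x - y) = T x - T y.
Proof. move=> hT; case: (hT) => hD _ _; by rewrite hD opN. Qed.
Lemma opD (T : H -> H) x y : bounded_op ip T -> T (x + y) = T x + T y.
Proof. by case=> h _ _; apply: h. Qed.
Lemma opZ (T : H -> H) a x : bounded_op ip T -> T (a *: x) = a *: T x.
Proof. by case=> _ h _; apply: h. Qed.


Lemma expand (A : H -> H) (hA : bounded_op ip A) a b c :
  ip (A (a + c *: b)) (a + c *: b) =
  ip (A a) a + Num.conj c * ip (A a) b + c * ip (A b) a + c * Num.conj c * ip (A b) b.
Proof.
rewrite (opD _ _ _ hA) (opZ _ _ _ hA) ipDl ipZl !ipDr !ipZr; ring.
Qed.

Lemma pyth (A : H -> H) (hA : bounded_op ip A) a b :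
  ip (A a) b = 0 -> ip (A b) a = 0 ->
  ip (A (a + b)) (a + b) = ip (A a) a + ip (A b) b.
Proof.
move=> h1 h2; have := expand _ hA a b 1; rewrite scale1r conjC1 h1 h2; move=> ->; ring.
Qed.

Section Proj.
Variables (A Q Qs : H -> H).
Hypotheses (hA : positive_op ip A) (hQ : bounded_op ip Q) (hQQ : forall x, Q (Q x) = Q x)
  (hQs : bounded_op ip Qs) (hadj : is_adjoint ip Q Qs) (hAQ : forall x, A (Q x) = Qs (A x)).

Let hAb : bounded_op ip A. Proof. by case: hA. Qed.

Lemma cross1 a z : Q a = 0 -> ip (A a) (Q z) = 0.
Proof.
move=> ha; rewrite ipJ hadj -hAQ ha (op0 _ hAb) ip0r conjC0 //.
Qed.
Lemma cross2 a z : Q a = 0 -> ip (A (Q z)) a = 0.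
Proof.
move=> ha; rewrite hAQ ipJ -hadj ha ip0l conjC0 //.
Qed.

Lemma QI w : Q (w - Q w) = 0.
Proof. by rewrite (opB _ _ _ hQ) hQQ subrr. Qed.

Lemma Anorm_ge0 x : 0 <= complex.Re (ip (A x) x).
Proof. case: hA => _ h; rewrite -ler0c RRe_real ?h // ger0_real // h //. Qed.

Lemma Qopt w s : Q s = s -> Anorm ip A (w - Q w) <= Anorm ip A (w - s).
Proof.
move=> hs; have e : w - s = (w - Q w) + Q (w - s).
  by rewrite (opB _ _ _ hQ) hs addrA subrK.
rewrite /Anorm e (pyth _ hAb (w - Q w) (Q (w - s))); last 2 first.
- by apply: cross1; apply: QI.
- by apply: cross2; apply: QI.
have -> : forall u v : R[i], complex.Re (u + v) = complex.Re u + complex.Re v by move=> u v; rewrite raddfD.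
rewrite ler_sqrt; last by apply: addr_ge0; apply: Anorm_ge0.
by rewrite lerDl Anorm_ge0.
Qed.

End Proj.

Lemma cjM (a b : R[i]) : Num.conj (a * b) = Num.conj a * Num.conj b.
Proof. exact: rmorphM. Qed.
Lemma cjV (a : R[i]) : Num.conj (a^-1) = (Num.conj a)^-1.
Proof. exact: fmorphV. Qed.

Lemma ipZZ c d : ip (c *: d) (c *: d) = c * Num.conj c * ip d d.
Proof. rewrite ipZl ipZr; ring. Qed.

Lemma ReD (u v : R[i]) : complex.Re (u + v) = complex.Re u + complex.Re v.
Proof. by rewrite raddfD. Qed.

Lemma para a b : complex.Re (ip (a - b) (a - b)) <=
   2 * complex.Re (ip a a) + 2 * complex.Re (ip b b).
Proof.
have E : ip (a + b) (a + b) + ip (a - b) (a - b) = ip a a + ip a a + ip b b + ip b b.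
  rewrite !ipBl !ipBr !ipDl !ipDr; ring.
have := congr1 (@complex.Re R) E; rewrite !ReD => E'.
have := Re_ip_ge0 (a + b); lra.
Qed.

Lemma Re_scal (r : R) (z : R[i]) : complex.Re (r%:C * z) = r * complex.Re z.
Proof. by case: z => u v /=; rewrite mul0r subr0. Qed.

Lemma CS y w : y != 0 ->
  ip w y * Num.conj (ip w y) / ip y y <= ip w w.
Proof.
move=> hy.
have hyy : ip y y != 0 by apply/eqP => /ip_eq0 /eqP; rewrite (negbTE hy).
have cyy : Num.conj (ip y y) = ip y y.
  by apply: conj_Creal; apply: ger0_real; apply: ip_ge0.
have := ip_ge0 (w - (ip w y / ip y y) *: y).
suff -> : ip (w - (ip w y / ip y y) *: y) (w - (ip w y / ip y y) *: y) =
  ip w w - ip w y * Num.conj (ip w y) / ip y y by rewrite subr_ge0.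
rewrite !ipBl !ipBr !ipZl !ipZr cjM cjV cyy (ipJ y w).
field; exact: hyy.
Qed.

Lemma Tbounded (Q : H -> H) (hQ : bounded_op ip Q) (y d : H) (hy : y != 0) :
  bounded_op ip (fun w => Q w - (ip w y / ip y y) *: d).
Proof.
have hyy : ip y y != 0 by apply/eqP => /ip_eq0 /eqP; rewrite (negbTE hy).
have cyy : Num.conj (ip y y) = ip y y.
  by apply: conj_Creal; apply: ger0_real; apply: ip_ge0.
split.
- move=> x z; rewrite (opD _ _ _ hQ) ipDl mulrDl scalerDl.
  by rewrite opprD addrACA.
- move=> a x; rewrite (opZ _ _ _ hQ) ipZl -mulrA -scalerA scalerBr //.
case: hQ => _ _ [M hM].
have kge0 : 0 <= ip d d / ip y y by apply: divr_ge0; apply: ip_ge0.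
set k := complex.Re (ip d d / ip y y).
have k0 : 0 <= k by have := Re_le _ _ kge0; rewrite /k.
exists (Num.sqrt (2 * M ^+ 2 + 2 * k)) => w.
have hN := Re_ip_ge0 w.
have hQw : complex.Re (ip (Q w) (Q w)) <= M ^+ 2 * complex.Re (ip w w).
  have h1 := hM w.
  have h0 : 0 <= normH ip (Q w) by apply: sqrtr_ge0.
  have := ler_pM h0 h0 h1 h1.
  rewrite -expr2 -[_ * _]expr2 exprMn /normH !sqr_sqrtr //; exact: Re_ip_ge0.
have hcd : complex.Re (ip ((ip w y / ip y y) *: d) ((ip w y / ip y y) *: d))
    <= complex.Re (ip w w) * k.
  rewrite ipZZ.
  have -> : ip w y / ip y y * Num.conj (ip w y / ip y y) * ip d d =
      (ip w y * Num.conj (ip w y) / ip y y) * (ip d d / ip y y).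
    rewrite cjM cjV cyy; field; exact: hyy.
  rewrite /k -Re_scal -ip_real; apply: Re_le.
  by apply: ler_wpM2r => //; apply: CS.
have hp := para (Q w) ((ip w y / ip y y) *: d).
rewrite /normH -sqrtrM; last by apply: addr_ge0; apply: mulr_ge0 => //; rewrite sqr_ge0.
apply: ler_wsqrtr.
have hM2 : 0 <= M ^+ 2 by rewrite sqr_ge0.
nra.
Qed.
End Aux.

Theorem mainTheorem12 (R : realType) (H : lmodType R[i]) (ip : H -> H -> R[i])
  (hip : inner_product ip) (hcomp : complete_space ip) (hsep : separable_space ip)
  (A B : H -> H) (hA : positive_op ip A) (hB : bounded_op ip B)
  (hBcl : closed_set ip (range B)) (hcompat : compatible ip A (range B))
  (y : H) (hy : y != 0) (u : H) :
  A_LSS ip A B y u <-> exists T : H -> H, PiAS ip A (range B) T /\ B u = T y.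
Proof.
have hAb : bounded_op ip A by case: hA.
split; last first.
  case=> T [[hT hrT hopt] e] x; rewrite /Anorm e.
  by apply: hopt; exists x.
move=> hL.
case: hcompat => Q [hQ hQQ hrng [Qs [hQs hadj hAQ]]].
have QB : forall z, range B z -> Q z = z.
  by move=> z /hrng [v <-]; rewrite hQQ.
have hyy : ip y y != 0 by apply/eqP => /(ip_eq0 _ _ _ hip) /eqP; rewrite (negbTE hy).
set d := Q y - B u.
have Qd : Q d = d by rewrite /d (opB _ _ _ _ _ _ hQ) hQQ (QB (B u)) //; exists u.
have Add : ip (A d) d = 0.
  have [x2 ex2] : range B (Q y) by apply/hrng; exists y.
  have h1 := hL x2; rewrite ex2 in h1.
  have h2 := Qopt _ _ _ hip _ _ _ hA hQ hQQ hadj hAQ y (B u) (QB (B u) (ex_intro _ u erefl)).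
  have E : y - B u = (y - Q y) + Q (y - B u).
    by rewrite (opB _ _ _ _ _ _ hQ) (QB (B u)) ?addrA ?subrK //; exists u.
  have Hp := pyth _ _ _ hip _ hAb (y - Q y) (Q (y - B u))
     (cross1 _ _ _ hip _ _ _ hA hadj hAQ _ _ (QI _ _ _ _ hQ hQQ y))
     (cross2 _ _ _ hip _ _ _ hadj hAQ _ _ (QI _ _ _ _ hQ hQQ y)).
  have Qyu : Q (y - B u) = d by rewrite /d (opB _ _ _ _ _ _ hQ) (QB (B u)) //; exists u.
  rewrite Qyu in Hp.
  have eq : Anorm ip A (y - B u) = Anorm ip A (y - Q y) by apply/eqP; rewrite eq_le h1 h2.
  move: eq; rewrite /Anorm E Qyu Hp (ReD _) => /eqP.
  rewrite eqr_sqrt; last 2 first.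
  - exact: (addr_ge0 (Anorm_ge0 _ _ _ _ hA _) (Anorm_ge0 _ _ _ _ hA _)).
  - exact: Anorm_ge0 _ _ _ _ hA (y - Q y).
  move/eqP => /(congr1 (fun t => t - complex.Re (ip (A (y - Q y)) (y - Q y)))) => /= hre.
  have {}hre : complex.Re (ip (A d) d) = 0 by lra.
  have hg : 0 <= ip (A d) d by case: hA.
  by rewrite -(RRe_real (ger0_real hg)) hre.
exists (fun w => Q w - (ip w y / ip y y) *: d); split; last first.
  by rewrite divff // scale1r /d opprB addrC subrK.
split.
- exact: Tbounded hip _ hQ y d hy.
- move=> w.
  have [x1 ex1] : range B (Q w) by apply/hrng; exists w.
  have [x2 ex2] : range B (Q y) by apply/hrng; exists y.
  exists (x1 - (ip w y / ip y y) *: (x2 - u)).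
  by rewrite (opB _ _ _ _ _ _ hB) (opZ _ _ _ _ _ _ hB) (opB _ _ _ _ _ _ hB) ex1 ex2.
- move=> w s hs.
  apply: le_trans (Qopt _ _ _ hip _ _ _ hA hQ hQQ hadj hAQ w s (QB s hs)).
  have E : w - (Q w - (ip w y / ip y y) *: d) = (w - Q w) + (ip w y / ip y y) *: d.
    by rewrite opprB addrA addrAC.
  rewrite /Anorm E (expand _ _ _ hip _ hAb).
  rewrite -{1 2}Qd (cross1 _ _ _ hip _ _ _ hA hadj hAQ _ _ (QI _ _ _ _ hQ hQQ w)).
  rewrite (cross2 _ _ _ hip _ _ _ hadj hAQ _ _ (QI _ _ _ _ hQ hQQ w)) Add.
  by rewrite !mulr0 !addr0.
Qed.
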